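(* Let $R$ be an associative ring with identity and involution $*$, and let $a\in R^{\#}\cap R^{\dagger}$. Then $a\in R^{SEP}$ if and only if $a^{\dagger}a^3a^*a^{\dagger}\in PE(R)$.
   Context: An involution on $R$ is a map $x\mapsto x^*$ with $(x^* )^*=x$, $(x+y)^*=x^*+y^*$, $(xy)^*=y^*x^*$. An element $a$ is Moore–Penrose invertible if there is $b$ with $aba=a$, $bab=b$, $(ab)^*=ab$, $(ba)^*=ba$; such $b$ is unique, denoted $a^{\dagger}$, and $R^{\dagger}$ is the set of such $a$. An element $a$ is group invertible if there is $b$ with $aba=a$, $bab=b$, $ab=ba$; such $b$ is unique, denoted $a^{\#}$, and $R^{\#}$ is the set of such $a$. $PE(R)=\{e\in R: e^2=e=e^*\}$ is the set of projections. For $a\in R^{\#}\cap R^{\dagger}$, $a$ is SEP if $a^*=a^{\dagger}=a^{\#}$; $R^{SEP}$ denotes the set of SEP elements. *)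

(* Defs.v *)
From HB Require Import structures.
From mathcomp Require Import all_boot all_algebra.
Set Implicit Arguments. Unset Strict Implicit. Unset Printing Implicit Defensive.
Import GRing.Theory.
Local Open Scope ring_scope.

Record involution (R : pzRingType) := Involution {
  inv_fun :> R -> R;
  inv_invol : forall x, inv_fun (inv_fun x) = x;
  inv_add : forall x y, inv_fun (x + y) = inv_fun x + inv_fun y;
  inv_mul : forall x y, inv_fun (x * y) = inv_fun y * inv_fun x
}.

Section Defs.
Variables (R : pzRingType) (star : involution R).

Definition is_mp_inverse (a b : R) : Prop :=
  a * b * a = a /\ b * a * b = b /\ star (a * b) = a * b /\ star (b * a) = b * a.

Definition is_group_inverse (a b : R) : Prop :=
  a * b * a = a /\ b * a * b = b /\ a * b = b * a.

Definition mp_invertible (a : R) : Prop := exists b, is_mp_inverse a b.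
Definition group_invertible (a : R) : Prop := exists b, is_group_inverse a b.

Definition is_projection (e : R) : Prop := e * e = e /\ e = star e.

(* a is SEP : a^* = a^dagger = a^#  (inverses are unique, so it is enough to say
   a^* is both the Moore-Penrose and the group inverse of a) *)
Definition is_SEP (a : R) : Prop :=
  is_mp_inverse a (star a) /\ is_group_inverse a (star a).
End Defs.

(* Main.v *)
Require Import Defs.
From mathcomp Require Import all_boot all_algebra.
Import GRing.Theory.
Local Open Scope ring_scope.

Ltac xf0 H := let x := fresh "x" in move=> x;
  match type of H with ?u = ?v =>
    transitivity (x * u); [by rewrite ?mulrA |
      transitivity (x * v); [exact (congr1 (GRing.mul x) H) | by rewrite ?mulrA]] end.
Ltac xf H := first [xf0 H | xf0 (esym H)].

Section S.
Variables (R : pzRingType) (s : involution R) (a b h : R).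
Hypotheses (H1 : a*b*a = a) (H2 : b*a*b = b) (H3 : s (a*b) = a*b) (H4 : s (b*a) = b*a).
Hypotheses (G1 : a*h*a = a) (G2 : h*a*h = h) (G3 : a*h = h*a).

Lemma haa : h*a*a = a. Proof. by rewrite -G3 G1. Qed.
Lemma aah : a*a*h = a. Proof. by rewrite -mulrA G3 mulrA G1. Qed.
Lemma D1 : s a = s a * a * b.
Proof. by rewrite -{1}H1 inv_mul H3 mulrA. Qed.
Lemma D2 : s a = b * a * s a.
Proof. by rewrite -{1}H1 -mulrA inv_mul H4. Qed.
Lemma D3 : s b = a * b * s b.
Proof. by rewrite -{1}H2 -mulrA inv_mul H3. Qed.

Lemma backward :
  let p := b * a ^+ 3 * s a * b in p * p = p -> p = s p ->
  is_SEP s a.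
Proof.
move=> p Pp Ps.
have E1 : p = a * b * p.
  rewrite Ps /p inv_mul {1}D3; by rewrite !mulrA.
have D2x : forall x, x * b * a * s a = x * s a by xf D2.
have Sx : forall x, x * s a * s a * s h = x * s a.
  have S : s a * s a * s h = s a by rewrite -inv_mul -inv_mul mulrA haa.
  xf S.
have Tx : forall x, x * s a * s b = x * b * a.
  have T : s a * s b = b * a by rewrite -inv_mul H4.
  xf T.
have H2x : forall x, x * b * a * b = x * b by xf H2.
have H1x : forall x, x * a * b * a = x * a by xf H1.
have aahx : forall x, x * a * a * h = x * a by xf aah.
have PW : p * (a * s a * s h * s b * b * a * h * h) = b * a.
  rewrite /p !exprS expr0 mulr1 !mulrA D2x Sx Tx H2x H1x aahx.
  by rewrite -(mulrA b) -(mulrA b) aah.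
have E2 : b * a = a * b * b * a.
  by rewrite -PW {1}E1 -(mulrA (a*b)) PW mulrA.
have E3 : b = a * b * b.
  by rewrite -{1}H2 E2 H2x.
have E4 : s a = a * b * s a.
  by rewrite {1}D2 {1}E3 D2x.
have E5 : a = a * a * b.
  by rewrite -{1}(inv_invol s a) {1}E4 inv_mul inv_invol H3 mulrA.
have E6 : h * a = a * b.
  by rewrite {1}E5 !mulrA haa.
have EP : b * a = a * b.
  by rewrite E2 -E6 H1x.
have baa : b * a * a = a by rewrite EP H1.
have baax : forall x, x * b * a * a = x * a by xf baa.
have F0 : s a * a * s a * b = s a * b.
  have := congr1 (fun z => b * b * z) Pp.
  rewrite /p !exprS expr0 mulr1 !mulrA !baax.
  by rewrite -!D2.
have D1x : forall x, x * s a * a * b = x * s a by xf D1.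
have F1 : s a * a * s a = s a.
  have := congr1 (fun z => z * a) F0; rewrite /=.
  by rewrite -!(mulrA _ b a) EP !mulrA D1x -D1.
have F2 : a * s a * a = a.
  by have := congr1 s F1; rewrite !inv_mul !inv_invol mulrA.
have X1 : a * s a = a * b by rewrite {1}D1 !mulrA F2.
have X2 : s a * a = b * a.
  by rewrite {1}D2 -(mulrA (b*a)) -(mulrA b) (mulrA a) F2.
split; split => //; rewrite ?inv_mul ?inv_invol //.
by split => //; rewrite X1 X2 EP.
Qed.
Lemma forward : is_SEP s a ->
  let p := b * a ^+ 3 * s a * b in p * p = p /\ p = s p.
Proof.
move=> [[S1 [S2 [S3 S4]]] [_ [_ G]]] p.
have H1x : forall x, x * a * b * a = x * a by xf H1.
have K1 : a * b = a * s a.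
  have K0 : a * b = a * s a * a * b by rewrite S1.
  by rewrite -H3 K0 -mulrA inv_mul H3 S3 mulrA H1.
have K2 : b * a = s a * a.
  have K0 : b * a = b * a * (s a * a).
    by rewrite !mulrA -(mulrA b) -(mulrA b) S1.
  by rewrite -H4 {1}K0 inv_mul S4 H4 mulrA H1x.
have Gx : forall x, x * a * s a = x * s a * a by xf G.
have S1x : forall x, x * a * s a * a = x * a by xf S1.
have Pe : p = a * s a.
  rewrite /p !exprS expr0 mulr1 !mulrA K2 -G S1 Gx.
  by rewrite S1 K1.
rewrite Pe; split; last by rewrite S3.
by rewrite mulrA S1.
Qed.
End S.

Theorem theorem2p5 (R : pzRingType) (star : involution R) (a adag asharp : R) :
  is_mp_inverse star a adag -> is_group_inverse a asharp ->
  (is_SEP star a <-> is_projection star (adag * a ^+ 3 * star a * adag)).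
Proof.
move=> [H1 [H2 [H3 H4]]] [G1 [G2 G3]]; split.
- move=> HS; have [P1 P2] := @forward R star a adag H1 H3 H4 HS; by split.
- move=> [P1 P2]; exact: (@backward R star a adag asharp H1 H2 H3 H4 G1 G3 P1 P2).
Qed.
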